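(* Let $A=A_s+A_d\epsilon\in\mathbb{DC}^{m\times n}$ with SVD $A=U\Sigma V^*$, $U\in\mathbb{DC}^{m\times m}$, $V\in\mathbb{DC}^{n\times n}$ unitary dual complex matrices, and $$\Sigma=\begin{bmatrix}\Sigma_{1s}&&\\&O&\\&&O\end{bmatrix}+\begin{bmatrix}\Sigma_{1d}&&\\&\Sigma_{2d}&\\&&O\end{bmatrix}\epsilon,$$ where $\Sigma_1=\Sigma_{1s}+\Sigma_{1d}\epsilon=\mathrm{diag}(\mu_1,\dots,\mu_r)$ with $\mu_1\ge\dots\ge\mu_r$ positive appreciable dual real numbers and $\Sigma_{2d}\epsilon=\mathrm{diag}(\mu_{r+1},\dots,\mu_t)$ with $\mu_{r+1}\ge\dots\ge\mu_t$ positive infinitesimal dual real numbers, $r\le t\le\min\{m,n\}$. Let $A^G=V\begin{bmatrix}\Sigma_1^{-1}&O\\O&O\end{bmatrix}U^*$. Then $$A^G\in\arg\min_{X\in\mathbb{DC}^{n\times m}}\|AXA-A\|_F,$$ where the minimum is taken with respect to the total order on dual real numbers; moreover $A^G$ is the minimizer of minimal Frobenius norm among all minimizers, and the optimal value is $\|AA^GA-A\|_F=\|\Sigma_{2d}\|_F\,\epsilon$. In particular, if all nonzero singular values of $A$ are appreciable ($r=t$), then $AA^GA=A$.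
   Context: A dual number is $a=a_s+a_d\epsilon$ where $\epsilon\neq0$, $\epsilon^2=0$, and $\epsilon$ commutes with real/complex numbers; it is appreciable if $a_s\neq0$ and infinitesimal otherwise. Dual reals are totally ordered by: $a>b$ iff $a_s>b_s$, or $a_s=b_s$ and $a_d>b_d$. For appreciable $\mu$, $\mu^{-1}=\mu_s^{-1}-\mu_s^{-2}\mu_d\epsilon$. For a dual complex matrix $A=A_s+A_d\epsilon$, $A^*=A_s^*+A_d^*\epsilon$; unitary means $U^*U=UU^*=I$. The Frobenius norm of a dual complex matrix is the nonnegative dual real number $\|A\|_F=\|A_s\|_F+\frac{\mathrm{tr}(A_s^*A_d+A_d^*A_s)}{2\|A_s\|_F}\epsilon$ if $A_s\neq O$, and $\|A\|_F=\|A_d\|_F\epsilon$ if $A_s=O$. Every $A\in\mathbb{DC}^{m\times n}$ has an SVD of the stated form with unique singular values $\mu_1,\dots,\mu_t$ (with multiplicities). *)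

(* Defs.v *)
From HB Require Import structures.
From mathcomp Require Import all_boot all_order all_algebra.
From mathcomp Require Import reals.
From mathcomp Require Export complex.
Set Implicit Arguments. Unset Strict Implicit. Unset Printing Implicit Defensive.
Import Order.TTheory GRing.Theory Num.Theory.
Local Open Scope ring_scope.

Section Dual.
Variable R : realType.
Local Notation C := R[i].

(* dual real number a_s + a_d eps, as the pair (a_s, a_d) *)
Definition dreal := (R * R)%type.

Definition dle (a b : dreal) : bool :=
  (a.1 < b.1) || ((a.1 == b.1) && (a.2 <= b.2)).

(* inverse of an appreciable dual number *)
Definition dinv (a : dreal) : dreal := (a.1^-1, - (a.1 ^- 2) * a.2).

(* dual complex matrix A_s + A_d eps, as the pair (A_s, A_d) *)
Definition dmx (m n : nat) := ('M[C]_(m, n) * 'M[C]_(m, n))%type.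

Definition dmx_of (m n : nat) (As Ad : 'M[C]_(m, n)) : dmx m n := (As, Ad).

Definition dmul m n p (A : dmx m n) (B : dmx n p) : dmx m p :=
  (A.1 *m B.1, A.1 *m B.2 + A.2 *m B.1).
Definition dsub m n (A B : dmx m n) : dmx m n := (A.1 - B.1, A.2 - B.2).
Definition did n : dmx n n := (1%:M, 0).

Definition cadj m n (A : 'M[C]_(m, n)) : 'M[C]_(n, m) := (map_mx (@conjc R) A)^T.
Definition dadj m n (A : dmx m n) : dmx n m := (cadj A.1, cadj A.2).

Definition dunitary n (U : dmx n n) : Prop :=
  dmul (dadj U) U = did n /\ dmul U (dadj U) = did n.

Definition cfrob m n (A : 'M[C]_(m, n)) : R := Num.sqrt (complex.Re (\tr (cadj A *m A))).

Definition dfrob m n (A : dmx m n) : dreal :=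
  if A.1 == 0 then (0, cfrob A.2)
  else (cfrob A.1, complex.Re (\tr (cadj A.1 *m A.2 + cadj A.2 *m A.1)) / (2 * cfrob A.1)).

Definition ddiag m n (k : nat) (d : nat -> dreal) : dmx m n :=
  (\matrix_(i < m, j < n) if ((i : nat) == j) && (i < k)%N then (d i).1%:C%C else 0,
   \matrix_(i < m, j < n) if ((i : nat) == j) && (i < k)%N then (d i).2%:C%C else 0).

End Dual.

(* Main.v *)
Require Import Defs.
From HB Require Import structures.
From mathcomp Require Import all_boot all_order all_algebra.
From mathcomp Require Import reals complex.
Import Order.TTheory GRing.Theory Num.Theory.
Local Open Scope ring_scope.
Set Implicit Arguments. Unset Strict Implicit. Unset Printing Implicit Defensive.

Lemma zmod4 (V : zmodType) (a b c d : V) : a - b + c - d = - (d - c - a + b).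
Proof.
rewrite !opprD !opprK (addrAC a) (addrAC (a + c)); congr (_ - b).
by rewrite [LHS]addrC (addrC a c) addrA.
Qed.

Lemma zmod4' (V : zmodType) (a b c d : V) : a + (- b + c) - d = - (d - a - (c - b)).
Proof. by rewrite !opprD !opprK (addrC (-b)) addrAC (addrC a). Qed.

Section Aux.
Variable R : realType.
Local Notation C := R[i].

Lemma cadjM m n p (A : 'M[C]_(m,n)) (B : 'M[C]_(n,p)) :
  cadj (A *m B) = cadj B *m cadj A.
Proof. by rewrite /cadj map_mxM trmx_mul. Qed.

Lemma cadjD m n (A B : 'M[C]_(m,n)) : cadj (A + B) = cadj A + cadj B.
Proof. by rewrite /cadj map_mxD linearD. Qed.

Lemma cadjN m n (A : 'M[C]_(m,n)) : cadj (- A) = - cadj A.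
Proof. by rewrite /cadj map_mxN linearN. Qed.

Lemma cadjB m n (A B : 'M[C]_(m,n)) : cadj (A - B) = cadj A - cadj B.
Proof. by rewrite cadjD cadjN. Qed.

Lemma cadjK m n (A : 'M[C]_(m,n)) : cadj (cadj A) = A.
Proof. by apply/matrixP=> i j; rewrite /cadj !mxE conjcK. Qed.

Lemma cadj0 m n : cadj (0 : 'M[C]_(m,n)) = 0.
Proof. by apply/matrixP=> i j; rewrite /cadj !mxE conjc0. Qed.

Lemma cadj1 n : cadj (1%:M : 'M[C]_n) = 1%:M.
Proof. by apply/matrixP=> i j; rewrite /cadj !mxE eq_sym; case: eqP; rewrite ?conjc1 ?conjc0. Qed.

Lemma tr_cadj n (A : 'M[C]_n) : \tr (cadj A) = (\tr A)^*%C.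
Proof.
rewrite /mxtrace rmorph_sum; apply: eq_bigr => i _.
by rewrite /cadj !mxE.
Qed.


Definition rdg m n k (f : nat -> C) : 'M[C]_(m,n) :=
  \matrix_(i < m, j < n) if ((i : nat) == j) && (i < k)%N then f i else 0.

Lemma rdg_mul m n p k l (f g : nat -> C) : (k <= n)%N ->
  rdg m n k f *m rdg n p l g = rdg m p (minn k l) (fun i => f i * g i).
Proof.
move=> kn; apply/matrixP=> i j; rewrite !mxE.
under eq_bigr do rewrite !mxE.
case Hik: (i < k)%N; last first.
  rewrite big1; first by rewrite leq_min Hik /= andbF.
  by move=> l0 _; rewrite ?Hik andbF mul0r.
have Hin : (i < n)%N by apply: leq_trans kn.
rewrite (bigD1 (Ordinal Hin)) //= big1 ?addr0; last first.
  move=> l0 /eqP ne; case: eqP; rewrite ?mul0r // => e; exfalso; apply: ne.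
  by apply: val_inj.
rewrite eqxx /= leq_min Hik /=.
by case: ifP; rewrite ?mulr0.
Qed.

Lemma cadj_rdg m n k f : cadj (rdg m n k f) = rdg n m k (fun i => (f i)^*%C).
Proof.
apply/matrixP=> i j; rewrite /cadj !mxE.
case: (eqVneq (i : nat) j) => [e|ne].
  by rewrite /= e; case: ifP; rewrite ?conjc0.
exact: conjc0.
Qed.

Lemma tr_rdg n k f : (k <= n)%N -> \tr (rdg n n k f) = \sum_(i < k) f i.
Proof.
move=> kn; rewrite /mxtrace.
under eq_bigr do rewrite mxE eqxx /=.
rewrite -big_mkcond /=.
by rewrite (big_ord_widen_cond n (fun i => true) f kn).
Qed.

Lemma rdg_eq m n k f g : (forall i, (i < k)%N -> f i = g i) -> rdg m n k f = rdg m n k g.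
Proof.
move=> H; apply/matrixP=> i j; rewrite !mxE.
by case: (i < k)%N / idP => Hi; rewrite ?andbT ?andbF // H.
Qed.

Lemma rdg_shrink m n k l f : (k <= l)%N -> (forall i, (k <= i < l)%N -> f i = 0) ->
  rdg m n l f = rdg m n k f.
Proof.
move=> kl H; apply/matrixP=> i j; rewrite !mxE.
case: (i < k)%N / idP => Hk.
  by rewrite (leq_trans Hk kl).
rewrite andbF; case: ((i : nat) == j) => //=; case: ifP => // Hl.
by rewrite H // Hl andbT leqNgt; apply/negP.
Qed.

Lemma rdgN m n k f : - rdg m n k f = rdg m n k (fun i => - f i).
Proof. by apply/matrixP=> i j; rewrite !mxE; case: ifP; rewrite ?oppr0. Qed.

Lemma rdgB m n k f g : rdg m n k f - rdg m n k g = rdg m n k (fun i => f i - g i).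
Proof. by apply/matrixP=> i j; rewrite !mxE; case: ifP; rewrite ?subr0. Qed.

Lemma rdg0 m n f : rdg m n 0 f = 0.
Proof. by apply/matrixP=> i j; rewrite !mxE andbF. Qed.


Definition nrm2 m n (A : 'M[C]_(m,n)) : R := complex.Re (\tr (cadj A *m A)).

Lemma tr_adjE m n (A : 'M[C]_(m,n)) :
  \tr (cadj A *m A) = \sum_i \sum_j (A j i * (A j i)^*%C).
Proof.
rewrite /mxtrace; apply: eq_bigr => i _; rewrite mxE; apply: eq_bigr => j _.
by rewrite /cadj !mxE mulrC.
Qed.

Lemma tr_adj_ge0 m n (A : 'M[C]_(m,n)) : 0 <= \tr (cadj A *m A).
Proof. by rewrite tr_adjE; apply: sumr_ge0 => i _; apply: sumr_ge0 => j _; apply: mulcJ_ge0. Qed.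

Lemma tr_adj_real m n (A : 'M[C]_(m,n)) : \tr (cadj A *m A) = (nrm2 A)%:C%C.
Proof.
rewrite /nrm2; have := ger0_Im (tr_adj_ge0 A).
by case: (\tr _) => a b /= ->.
Qed.

Lemma nrm2_ge0 m n (A : 'M[C]_(m,n)) : 0 <= nrm2 A.
Proof. by rewrite -lecR -tr_adj_real; apply: tr_adj_ge0. Qed.

Lemma nrm2_eq0 m n (A : 'M[C]_(m,n)) : nrm2 A = 0 -> A = 0.
Proof.
move=> H; have : \tr (cadj A *m A) = 0 by rewrite tr_adj_real H.
rewrite tr_adjE => /eqP; rewrite psumr_eq0; last first.
  by move=> i _; apply: sumr_ge0 => j _; apply: mulcJ_ge0.
move=> /allP Hall; apply/matrixP => j i; rewrite mxE.
have := Hall i (mem_index_enum _) => /=; rewrite psumr_eq0; last first.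
  by move=> k _; apply: mulcJ_ge0.
move=> /allP Hj; have := Hj j (mem_index_enum _) => /=.
by rewrite mulf_eq0 conjc_eq0 orbb => /eqP.
Qed.

Lemma nrm2_0 m n : nrm2 (0 : 'M[C]_(m,n)) = 0.
Proof. by rewrite /nrm2 mulmx0 linear0. Qed.

Lemma cfrobE m n (A : 'M[C]_(m,n)) : cfrob A = Num.sqrt (nrm2 A).
Proof. by []. Qed.

Lemma cfrob_ge0 m n (A : 'M[C]_(m,n)) : 0 <= cfrob A.
Proof. exact: sqrtr_ge0. Qed.

Lemma cfrob_gt0 m n (A : 'M[C]_(m,n)) : A != 0 -> 0 < cfrob A.
Proof.
move=> nz; rewrite cfrobE sqrtr_gt0 lt_def nrm2_ge0 andbT.
by apply/eqP => /nrm2_eq0 /eqP; apply/negP.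
Qed.

Lemma nrm2_proj_l m n (P : 'M[C]_m) (X : 'M[C]_(m,n)) :
  cadj P = P -> P *m P = P -> nrm2 X = nrm2 (P *m X) + nrm2 ((1%:M - P) *m X).
Proof.
move=> sP iP; rewrite /nrm2 -raddfD /= -mxtraceD; congr (complex.Re (\tr _)).
rewrite !cadjM cadjB cadj1 sP !mulmxA -[_ *m P *m P]mulmxA iP.
rewrite -[_ *m (1%:M - P) *m (1%:M - P)]mulmxA.
have -> : (1%:M - P) *m (1%:M - P) = 1%:M - P.
  by rewrite mulmxBl mul1mx mulmxBr mulmx1 iP subrr subr0.
by rewrite -mulmxDl -mulmxDr addrC subrK mulmx1.
Qed.

Lemma nrm2_proj_r m n (P : 'M[C]_n) (X : 'M[C]_(m,n)) :
  cadj P = P -> P *m P = P -> nrm2 X = nrm2 (X *m P) + nrm2 (X *m (1%:M - P)).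
Proof.
move=> sP iP; rewrite /nrm2 -raddfD /= -mxtraceD; congr complex.Re.
rewrite !cadjM cadjB cadj1 sP.
rewrite mxtraceD !(mxtrace_mulC (_ *m cadj X)) (mxtrace_mulC (cadj X)).
rewrite !mulmxA -[X *m P *m P]mulmxA iP.
rewrite -[X *m (1%:M - P) *m (1%:M - P)]mulmxA.
have -> : (1%:M - P) *m (1%:M - P) = 1%:M - P.
  by rewrite mulmxBl mul1mx mulmxBr mulmx1 iP subrr subr0.
by rewrite -mxtraceD -mulmxDl -mulmxDr addrC subrK mulmx1.
Qed.

Lemma nrm2_mull m n (U : 'M[C]_m) (X : 'M[C]_(m,n)) :
  cadj U *m U = 1%:M -> nrm2 (U *m X) = nrm2 X.
Proof. by move=> H; rewrite /nrm2 cadjM mulmxA -[_ *m cadj U *m U]mulmxA H mulmx1. Qed.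

Lemma nrm2_mulr m n (V : 'M[C]_n) (X : 'M[C]_(m,n)) :
  cadj V *m V = 1%:M -> nrm2 (X *m cadj V) = nrm2 X.
Proof.
move=> H; rewrite /nrm2 cadjM cadjK mxtrace_mulC !mulmxA -[_ *m cadj V *m V]mulmxA.
by rewrite H mulmx1 mxtrace_mulC.
Qed.

Lemma nrm2N m n (X : 'M[C]_(m,n)) : nrm2 (- X) = nrm2 X.
Proof. by rewrite /nrm2 cadjN mulNmx mulmxN opprK. Qed.


Lemma dmulA m n p q (A : dmx R m n) (B : dmx R n p) (D : dmx R p q) :
  dmul (dmul A B) D = dmul A (dmul B D).
Proof.
rewrite /dmul /=; congr pair; first by rewrite mulmxA.
by rewrite mulmxDl mulmxDr !mulmxA addrA.
Qed.

Lemma dmul1l m n (A : dmx R m n) : dmul (did R m) A = A.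
Proof. by case: A => a b; rewrite /dmul /did /= !mul1mx mul0mx addr0. Qed.

Lemma dmul1r m n (A : dmx R m n) : dmul A (did R n) = A.
Proof. by case: A => a b; rewrite /dmul /did /= !mulmx1 mulmx0 add0r. Qed.

Lemma dmulBr m n p (A : dmx R m n) (B D : dmx R n p) :
  dmul A (dsub B D) = dsub (dmul A B) (dmul A D).
Proof.
rewrite /dmul /dsub /=; congr pair; first exact: mulmxBr.
by rewrite !mulmxBr opprD addrACA.
Qed.

Lemma dmulBl m n p (A B : dmx R m n) (D : dmx R n p) :
  dmul (dsub A B) D = dsub (dmul A D) (dmul B D).
Proof.
rewrite /dmul /dsub /=; congr pair; first exact: mulmxBl.
by rewrite !mulmxBl opprD addrACA.
Qed.

Lemma dunitary_s n (U : dmx R n n) : dunitary U -> cadj U.1 *m U.1 = 1%:M.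
Proof. by case=> [[h _] _]. Qed.

Lemma dunitary_d n (U : dmx R n n) : dunitary U ->
  cadj U.1 *m U.2 + cadj U.2 *m U.1 = 0.
Proof. by case=> [[_ h] _]. Qed.

Lemma key_sandwich m n (U : dmx R m m) (V : dmx R n n) (D : dmx R m n) (Z : dmx R n m) :
  dunitary U -> dunitary V ->
  dmul (dmul (dmul (dmul U D) (dadj V)) (dmul (dmul V Z) (dadj U))) (dmul (dmul U D) (dadj V))
  = dmul (dmul U (dmul (dmul D Z) D)) (dadj V).
Proof.
move=> [hU _] [hV _].
rewrite !dmulA.
rewrite -[dmul (dadj V) (dmul V _)]dmulA hV dmul1l.
by rewrite -[dmul (dadj U) (dmul U _)]dmulA hU dmul1l.
Qed.

Lemma tr_Vlevel m n (W W' : 'M[C]_(m,n)) (Vs Vd : 'M[C]_n) :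
  cadj Vs *m Vs = 1%:M -> cadj Vs *m Vd + cadj Vd *m Vs = 0 ->
  \tr (cadj (W *m cadj Vs) *m (W *m cadj Vd + W' *m cadj Vs)
       + cadj (W *m cadj Vd + W' *m cadj Vs) *m (W *m cadj Vs))
  = \tr (cadj W *m W' + cadj W' *m W).
Proof.
move=> h1 h2.
rewrite cadjD !cadjM !cadjK mulmxDr mulmxDl !mxtraceD !mulmxA.
rewrite !(mxtrace_mulC _ (cadj _)) !mulmxA h1 !mul1mx.
have E : forall X : 'M_n, \tr (cadj Vd *m Vs *m X) + \tr (cadj Vs *m Vd *m X) = 0.
  by move=> X; rewrite -mxtraceD -mulmxDl addrC h2 mul0mx mxtrace0.
rewrite -(mulmxA (cadj Vd *m Vs)) -(mulmxA (cadj Vs *m Vd)).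
by rewrite addrACA E add0r.
Qed.


Lemma Ulevel m n (Ss Sd : 'M[C]_(m,n)) (Us Ud : 'M[C]_m) :
  cadj Us *m Us = 1%:M -> cadj Us *m Ud + cadj Ud *m Us = 0 ->
  cadj (Us *m Ss) *m (Us *m Sd + Ud *m Ss) + cadj (Us *m Sd + Ud *m Ss) *m (Us *m Ss)
  = cadj Ss *m Sd + cadj Sd *m Ss.
Proof.
move=> h1 h2.
rewrite cadjD !cadjM mulmxDr mulmxDl.
have E1 : forall p (X : 'M[C]_(n,m)) (Y : 'M[C]_(m,p)), X *m cadj Us *m (Us *m Y) = X *m Y.
  by move=> p X Y; rewrite mulmxA -(mulmxA X) h1 mulmx1.
rewrite !E1.
have E2 : cadj Ss *m cadj Us *m (Ud *m Ss) + cadj Ss *m cadj Ud *m (Us *m Ss) = 0.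
  by rewrite !mulmxA -!(mulmxA (cadj Ss)) -mulmxDr -mulmxDl h2 mul0mx mulmx0.
by rewrite addrACA E2 addr0.
Qed.

Lemma nrm2_uv m n (U : dmx R m m) (V : dmx R n n) (X : 'M[C]_(m,n)) :
  dunitary U -> dunitary V -> nrm2 (U.1 *m X *m cadj V.1) = nrm2 X.
Proof.
by move=> hU hV; rewrite nrm2_mulr ?(dunitary_s hV) // nrm2_mull ?(dunitary_s hU).
Qed.

Lemma dfrob_unit m n (U : dmx R m m) (V : dmx R n n) (S : dmx R m n) :
  dunitary U -> dunitary V -> dfrob (dmul (dmul U S) (dadj V)) = dfrob S.
Proof.
move=> hU hV.
have hUs := dunitary_s hU; have hVs := dunitary_s hV.
have hUd := dunitary_d hU; have hVd := dunitary_d hV.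
case: S => Ss Sd; rewrite /dfrob /dmul /dadj /=.
have e1 : (U.1 *m Ss *m cadj V.1 == 0) = (Ss == 0).
  apply/eqP/eqP => [h|->]; last by rewrite mulmx0 mul0mx.
  have : cadj U.1 *m (U.1 *m Ss *m cadj V.1) *m V.1 = Ss.
    by rewrite !mulmxA hUs mul1mx -mulmxA hVs mulmx1.
  by rewrite h mulmx0 mul0mx => <-.
rewrite e1; case: eqP => [->|_].
  by rewrite mulmx0 !mul0mx mulmx0 !addr0 add0r /cfrob -/(nrm2 _) -/(nrm2 Sd) nrm2_uv.
have ec : cfrob (U.1 *m Ss *m cadj V.1) = cfrob Ss by rewrite !cfrobE nrm2_uv.
rewrite ec tr_Vlevel // Ulevel //.
Qed.


Lemma nrm2_rdg m n k h : (k <= m)%N -> (k <= n)%N ->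
  nrm2 (rdg m n k h) = complex.Re (\sum_(i < k) (h i)^*%C * h i).
Proof. by move=> km kn; rewrite /nrm2 cadj_rdg rdg_mul // minnn tr_rdg. Qed.

Lemma cfrob0 m n : cfrob (0 : 'M[C]_(m,n)) = 0.
Proof. by rewrite cfrobE nrm2_0 sqrtr0. Qed.

Lemma dle0_dfrob m n (Z : dmx R m n) : dle (0, 0) (dfrob Z).
Proof.
rewrite /dle /dfrob; case: eqP => [_|h] /=.
  by rewrite ltxx eqxx cfrob_ge0 orbT.
by rewrite cfrob_gt0 //; apply/eqP.
Qed.

Lemma tr_conj_swap m n (X Y : 'M[C]_(m,n)) : \tr (cadj Y *m X) = (\tr (cadj X *m Y))^*%C.
Proof. by rewrite -tr_cadj cadjM cadjK. Qed.

Section Diag.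
Variables (m n r t : nat) (mu : nat -> dreal R).
Hypothesis Hrt : (r <= t)%N.
Hypothesis Htm : (t <= m)%N.
Hypothesis Htn : (t <= n)%N.
Hypothesis Hpos : forall i, (i < r)%N -> 0 < (mu i).1.
Hypothesis Hinf : forall i, (r <= i < t)%N -> (mu i).1 = 0.

Let Hrm : (r <= m)%N := leq_trans Hrt Htm.
Let Hrn : (r <= n)%N := leq_trans Hrt Htn.

Definition fa (i : nat) : C := ((mu i).1)%:C%C.
Definition fb (i : nat) : C := ((mu i).2)%:C%C.
Definition fa' (i : nat) : C := (((mu i).1)^-1)%:C%C.
Definition fb' (i : nat) : C := (- ((mu i).1 ^- 2) * (mu i).2)%:C%C.

Definition Ds := rdg m n r fa.
Definition Dd := rdg m n t fb.
Definition Gs := rdg n m r fa'.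
Definition Gd := rdg n m r fb'.
Definition Pm := rdg m m r (fun _ => 1).
Definition Pn := rdg n n r (fun _ => 1).

Lemma D_eq : ddiag m n t mu = (Ds, Dd).
Proof.
rewrite /ddiag /Ds /Dd; congr pair.
by rewrite -/(rdg m n t fa) (rdg_shrink _ _ Hrt) // => i /Hinf; rewrite /fa => ->.
Qed.

Lemma G_eq : ddiag n m r (fun i => dinv (mu i)) = (Gs, Gd).
Proof. by []. Qed.

Lemma rc_inv i : (i < r)%N -> fa' i * fa i = 1.
Proof.
move=> Hi; rewrite /fa' /fa -rmorphM /= mulVf ?rmorph1 //.
by rewrite gt_eqF // Hpos.
Qed.

Lemma Gs_Ds : Gs *m Ds = Pn.
Proof. by rewrite /Gs /Ds rdg_mul // minnn; apply: rdg_eq => i /rc_inv. Qed.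

Lemma Ds_Gs : Ds *m Gs = Pm.
Proof. by rewrite /Gs /Ds rdg_mul // minnn; apply: rdg_eq => i /rc_inv; rewrite mulrC. Qed.

Lemma Pm_Ds : Pm *m Ds = Ds.
Proof. by rewrite /Pm /Ds rdg_mul // minnn; apply: rdg_eq => i _; rewrite mul1r. Qed.

Lemma Ds_Pn : Ds *m Pn = Ds.
Proof. by rewrite /Pn /Ds rdg_mul // minnn; apply: rdg_eq => i _; rewrite mulr1. Qed.

Lemma Gs_Pm : Gs *m Pm = Gs.
Proof. by rewrite /Pm /Gs rdg_mul // minnn; apply: rdg_eq => i _; rewrite mulr1. Qed.

Lemma Pn_Gs : Pn *m Gs = Gs.
Proof. by rewrite /Pn /Gs rdg_mul // minnn; apply: rdg_eq => i _; rewrite mul1r. Qed.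

Lemma Pm_idem : Pm *m Pm = Pm.
Proof. by rewrite /Pm rdg_mul // minnn; apply: rdg_eq => i _; rewrite mul1r. Qed.

Lemma Pn_idem : Pn *m Pn = Pn.
Proof. by rewrite /Pn rdg_mul // minnn; apply: rdg_eq => i _; rewrite mul1r. Qed.

Lemma Pm_adj : cadj Pm = Pm.
Proof. by rewrite /Pm cadj_rdg; apply: rdg_eq => i _; rewrite conjc1. Qed.

Lemma Pn_adj : cadj Pn = Pn.
Proof. by rewrite /Pn cadj_rdg; apply: rdg_eq => i _; rewrite conjc1. Qed.

Lemma Gd_eq : Gd = - (Gs *m Dd *m Gs).
Proof.
rewrite /Gs /Dd /Gd rdg_mul // rdg_mul; last by rewrite geq_min Hrn.
rewrite (minn_idPl Hrt) minnn rdgN; apply: rdg_eq => i Hi.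
rewrite /fa' /fb' /fb -!rmorphM -rmorphN /=; congr (_%:C)%C.
by rewrite mulNr mulrAC -expr2 exprVn.
Qed.

Definition Qm := 1%:M - Pm.
Definition Qn := 1%:M - Pn.
Definition E := Qm *m Dd *m Qn.
Definition res (Z : dmx R n m) := dsub (dmul (dmul (Ds, Dd) Z) (Ds, Dd)) (Ds, Dd).

Lemma Qm_Ds : Qm *m Ds = 0.
Proof. by rewrite /Qm mulmxBl mul1mx Pm_Ds subrr. Qed.

Lemma Ds_Qn : Ds *m Qn = 0.
Proof. by rewrite /Qn mulmxBr mulmx1 Ds_Pn subrr. Qed.

Lemma res1 Z : (res Z).1 = Ds *m Z.1 *m Ds - Ds.
Proof. by []. Qed.

Lemma res2 Z : (res Z).2 = Ds *m Z.1 *m Dd + (Ds *m Z.2 + Dd *m Z.1) *m Ds - Dd.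
Proof. by []. Qed.

Lemma res2_block Z : Qm *m (res Z).2 *m Qn = - E.
Proof.
have H : forall (X : 'M[C]_(n,n)) (Y : 'M[C]_(m,m)),
    Qm *m (Ds *m X + Y *m Ds - Dd) *m Qn = - E.
  move=> X Y.
  rewrite (mulmxBr Qm) (mulmxDr Qm) (mulmxBl _ _ Qn) (mulmxDl _ _ Qn).
  rewrite (mulmxA Qm Ds) Qm_Ds mul0mx mul0mx add0r.
  rewrite -(mulmxA Qm) -(mulmxA Y) Ds_Qn mulmx0 mulmx0 add0r.
  by rewrite /E.
by rewrite res2 -(mulmxA Ds) H.
Qed.

Lemma nrm2_res2 Z : nrm2 (res Z).2 =
  nrm2 (Pm *m (res Z).2) + nrm2 (Qm *m (res Z).2 *m Pn) + nrm2 E.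
Proof.
rewrite (nrm2_proj_l (res Z).2 Pm_adj Pm_idem) -/Qm.
rewrite (nrm2_proj_r (Qm *m (res Z).2) Pn_adj Pn_idem) -/Qn.
by rewrite res2_block nrm2N addrA.
Qed.

Lemma resG : res (Gs, Gd) = (0, - E).
Proof.
rewrite /res /dmul /dsub /=; congr pair.
  by rewrite Ds_Gs Pm_Ds subrr.
rewrite Gd_eq mulmxN !mulmxA Ds_Gs mulmxDl mulNmx -!(mulmxA _ Gs Ds) Gs_Ds.
rewrite /E /Qm /Qn (mulmxBl _ Pm Dd) mul1mx (mulmxBr _ _ Pn) mulmx1 (mulmxBl _ _ Pn).
by apply: zmod4'.
Qed.

Definition fE (i : nat) : C := if (i < r)%N then 0 else fb i.

Lemma E_rdg : E = rdg m n t fE.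
Proof.
have PD : Pm *m Dd = rdg m n r fb.
  by rewrite /Pm /Dd rdg_mul // (minn_idPl Hrt); apply: rdg_eq => i _; rewrite mul1r.
have DP : Dd *m Pn = rdg m n r fb.
  by rewrite /Pn /Dd rdg_mul // (minn_idPr Hrt); apply: rdg_eq => i _; rewrite mulr1.
have PDP : rdg m n r fb *m Pn = rdg m n r fb.
  by rewrite /Pn rdg_mul // minnn; apply: rdg_eq => i _; rewrite mulr1.
rewrite /E /Qm /Qn (mulmxBl _ Pm Dd) mul1mx PD (mulmxBr _ _ Pn) mulmx1 (mulmxBl _ _ Pn).
rewrite DP PDP subrr subr0.
have -> : rdg m n r fb = rdg m n t (fun i => if (i < r)%N then fb i else 0).
  rewrite (rdg_shrink _ _ Hrt); last by move=> i /andP[]; rewrite leqNgt => /negPf ->.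
  by apply: rdg_eq => i ->.
rewrite /Dd rdgB; apply: rdg_eq => i _; rewrite /fE; case: ifP => _.
  by rewrite subrr.
by rewrite subr0.
Qed.

Lemma nrm2_E : nrm2 E = complex.Re (\sum_(i < t - r) (fb (r + i))^*%C * fb (r + i)).
Proof.
rewrite E_rdg nrm2_rdg //; congr complex.Re.
rewrite -(big_mkord xpredT (fun i => (fE i)^*%C * fE i)).
rewrite -(big_mkord xpredT (fun i => (fb (r + i))^*%C * fb (r + i))).
rewrite (big_cat_nat (leq0n r) Hrt) /= big_nat_cond big1 ?add0r; last first.
  by move=> i /andP[/andP[_ Hi] _]; rewrite /fE Hi mulr0.
rewrite (big_addn 0 t r); apply: eq_bigr => i _.
by rewrite /fE ltnNge leq_addl /= addnC.
Qed.

Lemma dfrob_resG : dfrob (res (Gs, Gd)) = (0, cfrob E).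
Proof. by rewrite resG /dfrob /= eqxx !cfrobE nrm2N. Qed.

Lemma opt1 Z : dle (dfrob (res (Gs, Gd))) (dfrob (res Z)).
Proof.
rewrite dfrob_resG /dle /dfrob; case: eqP => [_|h] /=; last first.
  by rewrite cfrob_gt0 //; apply/eqP.
rewrite ltxx eqxx /= !cfrobE ler_sqrt ?nrm2_ge0 // (nrm2_res2 Z) lerDr.
by rewrite addr_ge0 ?nrm2_ge0.
Qed.

Lemma GS2G Z : Z.1 = Gs -> Pm *m (res Z).2 = 0 -> Pn *m Z.2 *m Pm = Gd.
Proof.
move=> hZ hP.
have h0 : Gs *m (res Z).2 *m Gs = 0.
  by rewrite -{1}Gs_Pm -(mulmxA Gs Pm) hP mulmx0 mul0mx.
rewrite res2 hZ Ds_Gs in h0.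
rewrite (mulmxBr Gs) (mulmxDr Gs) (mulmxBl _ _ Gs) (mulmxDl _ _ Gs) in h0.
have ea : Gs *m (Pm *m Dd) *m Gs = Gs *m Dd *m Gs by rewrite mulmxA Gs_Pm.
have eb : Gs *m ((Ds *m Z.2 + Dd *m Gs) *m Ds) *m Gs = Pn *m Z.2 *m Pm + Gs *m Dd *m Gs.
  rewrite mulmxA -(mulmxA _ Ds Gs) Ds_Gs (mulmxDr Gs) (mulmxDl _ _ Pm) !mulmxA Gs_Ds.
  by rewrite -(mulmxA _ Gs Pm) Gs_Pm.
rewrite ea eb addrA addrK addrC in h0.
by rewrite Gd_eq; apply/eqP; rewrite -addr_eq0 h0.
Qed.

Lemma tr_G Z2 : Pn *m Z2 *m Pm = Gd ->
  \tr (cadj Gs *m Z2 + cadj Z2 *m Gs) = \tr (cadj Gs *m Gd + cadj Gd *m Gs).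
Proof.
move=> hPZ.
have t1 : \tr (cadj Gs *m Z2) = \tr (cadj Gs *m Gd).
  have eG : Gs = Pn *m Gs *m Pm by rewrite Pn_Gs Gs_Pm.
  rewrite {1}eG !cadjM Pm_adj Pn_adj -!mulmxA mxtrace_mulC !mulmxA.
  by rewrite -(mulmxA (cadj Gs) Pn Z2) -(mulmxA (cadj Gs) (Pn *m Z2) Pm) hPZ.
by rewrite !mxtraceD (tr_conj_swap Gs Z2) (tr_conj_swap Gs Gd) t1.
Qed.

Lemma opt2 Z : dle (dfrob (res Z)) (dfrob (res (Gs, Gd))) -> dle (dfrob (Gs, Gd)) (dfrob Z).
Proof.
rewrite dfrob_resG => H.
have [hS1 hnrm] : (res Z).1 = 0 /\ nrm2 (res Z).2 <= nrm2 E.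
  move: H; rewrite /dle /dfrob; case: eqP => [h|h] /=.
    by rewrite ltxx eqxx /= !cfrobE ler_sqrt ?nrm2_ge0.
  have hp : 0 < cfrob (res Z).1 by apply: cfrob_gt0; apply/eqP.
  by rewrite ltNge (ltW hp) /= gt_eqF.
have hPS : Pm *m (res Z).2 = 0.
  apply: nrm2_eq0; move: hnrm; rewrite nrm2_res2 gerDr => h.
  apply/eqP; rewrite eq_le nrm2_ge0 andbT; apply: le_trans h.
  by rewrite lerDl nrm2_ge0.
have hZs : Pn *m Z.1 *m Pm = Gs.
  have e : Ds *m Z.1 *m Ds = Ds by apply: subr0_eq; rewrite -res1.
  have := congr1 (fun M => Gs *m M *m Gs) e => /=.
  rewrite !mulmxA Gs_Ds -(mulmxA _ Ds Gs) Ds_Gs Pn_Gs.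
  by [].
have d1 := nrm2_proj_l Z.1 Pn_adj Pn_idem.
have d2 := nrm2_proj_r (Pn *m Z.1) Pm_adj Pm_idem.
rewrite hZs in d2.
case: (eqVneq Gs 0) => [G0|G0].
  have Gd0 : Gd = 0 by rewrite Gd_eq G0 !mul0mx oppr0.
  have -> : dfrob (Gs, Gd) = (0, 0) by rewrite /dfrob /= G0 eqxx Gd0 cfrob0.
  exact: dle0_dfrob.
set x := nrm2 (Pn *m Z.1 *m (1%:M - Pm)) + nrm2 ((1%:M - Pn) *m Z.1).
have x0 : 0 <= x by rewrite addr_ge0 ?nrm2_ge0.
have hZ1 : nrm2 Z.1 = nrm2 Gs + x by rewrite d1 d2 /x addrA.
move: x0; rewrite le_eqVlt => /orP[/eqP x0|xpos].
  move: x0 => /esym; rewrite /x => /eqP; rewrite paddr_eq0 ?nrm2_ge0 //.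
  move=> /andP[/eqP/nrm2_eq0 h1 /eqP/nrm2_eq0 h2].
  have eZ : Z.1 = Gs.
    have -> : Z.1 = Pn *m Z.1 + (1%:M - Pn) *m Z.1 by rewrite -mulmxDl addrC subrK mul1mx.
    rewrite h2 addr0.
    have -> : Pn *m Z.1 = Pn *m Z.1 *m Pm + Pn *m Z.1 *m (1%:M - Pm).
      by rewrite -mulmxDr addrC subrK mulmx1.
    by rewrite h1 addr0 hZs.
  have hPZ := GS2G eZ hPS.
  move: eZ hPZ; case: Z {H hS1 hnrm hPS hZs d1 d2 x hZ1 h1 h2} => Z1 Z2 /= -> hPZ.
  rewrite /dfrob /= (negPf G0) /dle /= ltxx eqxx /= (tr_G hPZ).
  by [].
have Z1nz : Z.1 != 0.
  apply/eqP => z0; move: hZ1; rewrite z0 nrm2_0 => /esym/eqP.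
  by rewrite paddr_eq0 ?nrm2_ge0 ?(ltW xpos) // (gt_eqF xpos) andbF.
rewrite /dfrob (negPf G0) (negPf Z1nz) /dle /=.
rewrite !cfrobE ltr_sqrt; last by rewrite hZ1 ltr_pwDr // nrm2_ge0.
by rewrite hZ1 ltrDl xpos.
Qed.

Lemma Sigma_eq :
  (\matrix_(i < t - r, j < t - r) if i == j then ((mu (r + i)%N).2)%:C%C else 0)
  = rdg (t - r) (t - r) (t - r) (fun i => fb (r + i)).
Proof. by apply/matrixP => i j; rewrite !mxE ltn_ord andbT. Qed.

Lemma diag_main :
  [/\ forall Z, dle (dfrob (res (Gs, Gd))) (dfrob (res Z)),
      forall Z, dle (dfrob (res Z)) (dfrob (res (Gs, Gd))) -> dle (dfrob (Gs, Gd)) (dfrob Z),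
      dfrob (res (Gs, Gd)) = dfrob (dmx_of 0
        (\matrix_(i < t - r, j < t - r) if i == j then ((mu (r + i)%N).2)%:C%C else 0)) &
      (r = t -> res (Gs, Gd) = (0, 0))].
Proof using Hrt Htm Htn Hpos Hinf.
split.
- exact: opt1.
- exact: opt2.
- rewrite dfrob_resG /dfrob /dmx_of /= eqxx; congr pair.
  by rewrite !cfrobE Sigma_eq nrm2_rdg // nrm2_E.
- move=> ert; rewrite resG.
  have -> : E = 0.
    rewrite E_rdg; apply/matrixP => i j; rewrite !mxE /fE.
    by rewrite ert; case: (i < t)%N; rewrite ?andbF ?andbT //; case: (_ == _).
  by rewrite oppr0.
Qed.

End Diag.


End Aux.

Lemma dsub_eq0 (R : realType) m n (P Q : dmx R m n) : dsub P Q = (0, 0) -> P = Q.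
Proof. by case: P Q => p1 p2 [q1 q2]; rewrite /dsub /= => [[/subr0_eq -> /subr0_eq ->]]. Qed.

Lemma dmul0_mid (R : realType) m n (U : dmx R m m) (V : dmx R n n) :
  dmul (dmul U ((0, 0) : dmx R m n)) (dadj V) = (0, 0).
Proof. by rewrite /dmul /= !(mulmx0, mul0mx, addr0). Qed.

Unset Implicit Arguments.

Lemma dle_eq {R : realType} {a aa b bb : dreal R} : a = aa -> b = bb -> dle aa bb -> dle a b.
Proof. by move=> -> ->. Qed.
Theorem theorem4p2 (R : realType) (m n r t : nat)
  (A : dmx R m n) (U : dmx R m m) (V : dmx R n n) (mu : nat -> dreal R) :
  (r <= t)%N -> (t <= minn m n)%N ->
  dunitary U -> dunitary V ->
  (* mu_1 >= ... >= mu_r positive appreciable *)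
  (forall i, (i < r)%N -> 0 < (mu i).1) ->
  (forall i, (i.+1 < r)%N -> dle (mu i.+1) (mu i)) ->
  (* mu_{r+1} >= ... >= mu_t positive infinitesimal *)
  (forall i, (r <= i < t)%N -> (mu i).1 = 0 /\ 0 < (mu i).2) ->
  (forall i, (r <= i)%N -> (i.+1 < t)%N -> dle (mu i.+1) (mu i)) ->
  (* A = U Sigma V^*, Sigma = diag(mu_1, ..., mu_t, 0, ...) *)
  A = dmul (dmul U (ddiag m n t mu)) (dadj V) ->
  let AG : dmx R n m := dmul (dmul V (ddiag n m r (fun i => dinv (mu i)))) (dadj U) in
  let Sigma2d : 'M[R[i]]_(t - r) :=
    \matrix_(i < t - r, j < t - r) if i == j then (mu (r + i)%N).2%:C%C else 0 in
  [/\ (* A^G minimizes ||AXA - A||_F w.r.t. the total order on dual reals *)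
      (forall X : dmx R n m,
         dle (dfrob (dsub (dmul (dmul A AG) A) A)) (dfrob (dsub (dmul (dmul A X) A) A))),
      (* A^G has minimal Frobenius norm among all minimizers *)
      (forall X : dmx R n m,
         (forall Y : dmx R n m,
            dle (dfrob (dsub (dmul (dmul A X) A) A)) (dfrob (dsub (dmul (dmul A Y) A) A))) ->
         dle (dfrob AG) (dfrob X)),
      (* optimal value = ||Sigma_2d||_F eps *)
      dfrob (dsub (dmul (dmul A AG) A) A) = dfrob (dmx_of 0 Sigma2d) &
      (* if r = t then A A^G A = A *)
      (r = t -> dmul (dmul A AG) A = A)].
Proof.
move=> Hrt Htmn hU hV Hpos _ Hinf' _ HA AG Sigma2d.
have Htm : (t <= m)%N by move: Htmn; rewrite leq_min => /andP[].
have Htn : (t <= n)%N by move: Htmn; rewrite leq_min => /andP[].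
have Hinf : forall i, (r <= i < t)%N -> (mu i).1 = 0 by move=> i /Hinf' [].
have [o1 o2 o3 o4] := diag_main Hrt Htm Htn Hpos Hinf.
have HA' : A = dmul (dmul U (Ds m n r mu, Dd m n t mu)) (dadj V).
  rewrite HA; exact: (congr1 (fun D => dmul (dmul U D) (dadj V)) (D_eq m n Hrt Hinf)).
have KEY : forall Z, dsub (dmul (dmul A (dmul (dmul V Z) (dadj U))) A) A
                     = dmul (dmul U (res r t mu Z)) (dadj V).
  move=> Z; rewrite HA' (key_sandwich (Ds m n r mu, Dd m n t mu) Z hU hV).
  rewrite /res (dmulBr U (dmul (dmul (Ds m n r mu, Dd m n t mu) Z) (Ds m n r mu, Dd m n t mu))
                      (Ds m n r mu, Dd m n t mu)).
  by rewrite (dmulBl (dmul U (dmul (dmul (Ds m n r mu, Dd m n t mu) Z) (Ds m n r mu, Dd m n t mu)))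
                    (dmul U (Ds m n r mu, Dd m n t mu)) (dadj V)).
have eAG : AG = dmul (dmul V (Gs m n r mu, Gd m n r mu)) (dadj U) by [].
clearbody AG.
move: (Gs m n r mu, Gd m n r mu) o1 o2 o3 o4 eAG => G o1 o2 o3 o4 eAG.
have eX : forall X : dmx R n m, X = dmul (dmul V (dmul (dmul (dadj V) X) U)) (dadj U).
  move=> X; case: (hU) => _ hU2; case: (hV) => _ hV2.
  rewrite -(dmulA V (dmul (dadj V) X) U) -(dmulA V (dadj V) X) hV2 dmul1l.
  by rewrite (dmulA X U (dadj U)) hU2 dmul1r.
have fr : forall Z, dfrob (dsub (dmul (dmul A (dmul (dmul V Z) (dadj U))) A) A)
                  = dfrob (res r t mu Z).
  move=> Z; exact: (etrans (congr1 (@dfrob R m n) (KEY Z)) (dfrob_unit (res r t mu Z) hU hV)).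
have fx : forall Z, dfrob (dmul (dmul V Z) (dadj U)) = dfrob Z.
  move=> Z; exact: (dfrob_unit Z hV hU).
split.
- move=> X; rewrite (eX X) eAG.
  exact: (dle_eq (fr G) (fr _) (o1 _)).
- move=> X HX; have := HX AG; rewrite (eX X) eAG => h.
  exact: (dle_eq (fx G) (fx _) (o2 _ (dle_eq (esym (fr _)) (esym (fr G)) h))).
- rewrite eAG; exact: (etrans (fr G) o3).
- move=> ert; apply: dsub_eq0; rewrite eAG (KEY G) (o4 ert); exact: dmul0_mid.
Qed.
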